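(* Let $\Sigma$ be a finite alphabet with $|\Sigma|\ge 2$, let $m,n$ be positive integers with $m\ge 2$, and let $\rho_1,\rho_2,\rho_3>0$ with $\rho_1+\rho_2+\rho_3\le 1$. The Markov chains with transition matrices $S^{\mathfrak{N}(n)}_{\rho_1,\rho_2,\rho_3}$, $S^{\mathfrak{N}_m(n)}_{\rho_1,\rho_2,\rho_3}$ and $S^{\mathfrak{N}'_m(n)}_{\rho_1,\rho_2,\rho_3}$ are ergodic (irreducible and aperiodic), and their stationary distributions are the uniform distributions on $\mathfrak{N}(n)$, $\mathfrak{N}_m(n)$ and $\mathfrak{N}'_m(n)$ respectively.
   Context: A non-deterministic automaton (NFA) over $\Sigma$ is a tuple $(Q,\Sigma,\Delta,I,F)$ with $Q$ a finite set of states, $\Delta\subseteq Q\times\Sigma\times Q$ the transitions, $I\subseteq Q$ the initial states and $F\subseteq Q$ the final states. The NFA is trim if every state is reachable by a path of transitions from an initial state and from every state some final state is reachable by a path of transitions. $\mathfrak{N}(n)$ is the set of trim NFAs over $\Sigma$ with state set $Q=\{1,\dots,n\}$. $\mathfrak{N}_m(n)$ is the set of automata in $\mathfrak{N}(n)$ such that for each state $p$ there are at most $m$ pairs $(a,q)$ with $(p,a,q)\in\Delta$. $\mathfrak{N}'_m(n)$ is the set of automata in $\mathfrak{N}(n)$ such that for each state $p$ and each letter $a$ there are at most $m$ states $q$ with $(p,a,q)\in\Delta$. For an automaton $\mathcal{A}=(Q,\Sigma,\Delta,I,F)$: $\mathsf{Ch_{init}}(\mathcal{A},q)$ is $\mathcal{A}$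 with $q$ removed from $I$ if $q\in I$ and added to $I$ otherwise; $\mathsf{Ch_{final}}(\mathcal{A},q)$ is defined similarly with $F$; $\mathsf{Ch_{trans}}(\mathcal{A},(p,a,q))$ is $\mathcal{A}$ with $(p,a,q)$ removed from $\Delta$ if present and added otherwise. For a class $\mathfrak{X}$ of automata with state set $Q=\{1,\dots,n\}$, the matrix $S^{\mathfrak{X}}_{\rho_1,\rho_2,\rho_3}$ on $\mathfrak{X}\times\mathfrak{X}$ is: for $x\ne y$, $S(x,y)=\rho_1/n$ if $y=\mathsf{Ch_{init}}(x,q)$ for some $q$; $S(x,y)=\rho_2/n$ if $y=\mathsf{Ch_{final}}(x,q)$ for some $q$; $S(x,y)=\rho_3/(|\Sigma|n^2)$ if $y=\mathsf{Ch_{trans}}(x,(p,a,q))$ for some $(p,a,q)\in Q\times\Sigma\times Q$; $S(x,y)=0$ otherwise; and $S(x,x)=1-\sum_{y\ne x}S(x,y)$. *)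

(* Defs.v *)
From mathcomp Require Import all_boot all_order all_algebra.
Set Implicit Arguments. Unset Strict Implicit. Unset Printing Implicit Defensive.
Import Order.TTheory GRing.Theory Num.Theory.
Local Open Scope ring_scope.

Section Automata.
Variables (Sigma : finType) (n : nat).

(* An automaton over Sigma with state set Q = 'I_n (= {1..n} up to relabelling):
   (initial states I, final states F, transitions Delta). *)
Definition nfa : finType :=
  ({set 'I_n} * {set 'I_n} * {set ('I_n * Sigma * 'I_n)})%type.

Definition initS (A : nfa) : {set 'I_n} := A.1.1.
Definition finalS (A : nfa) : {set 'I_n} := A.1.2.
Definition transS (A : nfa) : {set ('I_n * Sigma * 'I_n)} := A.2.

Definition step (A : nfa) : rel 'I_n :=
  fun p q => [exists a : Sigma, (p, a, q) \in transS A].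

Definition trim (A : nfa) : bool :=
  [forall q : 'I_n, [exists i in initS A, connect (step A) i q]] &&
  [forall q : 'I_n, [exists f in finalS A, connect (step A) q f]].

Definition classN : pred nfa := fun A => trim A.
Definition classNm (m : nat) : pred nfa := fun A =>
  trim A &&
  [forall p : 'I_n, #|[set aq : Sigma * 'I_n | (p, aq.1, aq.2) \in transS A]| <= m]%N.
Definition classN'm (m : nat) : pred nfa := fun A =>
  trim A &&
  [forall p : 'I_n, forall a : Sigma, #|[set q : 'I_n | (p, a, q) \in transS A]| <= m]%N.

Definition toggle (T : finType) (x : T) (B : {set T}) : {set T} :=
  if x \in B then B :\ x else x |: B.

Definition Ch_init (A : nfa) (q : 'I_n) : nfa := (toggle q (initS A), finalS A, transS A).
Definition Ch_final (A : nfa) (q : 'I_n) : nfa := (initS A, toggle q (finalS A), transS A).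
Definition Ch_trans (A : nfa) (t : 'I_n * Sigma * 'I_n) : nfa :=
  (initS A, finalS A, toggle t (transS A)).

Variable R : realFieldType.

Definition Soff (r1 r2 r3 : R) (x y : nfa) : R :=
  if [exists q, y == Ch_init x q] then r1 / n%:R
  else if [exists q, y == Ch_final x q] then r2 / n%:R
  else if [exists t, y == Ch_trans x t] then r3 / (#|Sigma|%:R * (n%:R) ^+ 2)
  else 0.

(* the matrix S^X_{r1,r2,r3} on X x X (only entries with x, y in X are meaningful) *)
Definition Smat (X : pred nfa) (r1 r2 r3 : R) (x y : nfa) : R :=
  if x == y then 1 - \sum_(z | X z && (z != x)) Soff r1 r2 r3 x z
  else Soff r1 r2 r3 x y.

End Automata.

Section Markov.
Variables (T : finType) (R : realFieldType).

Fixpoint Spow (X : pred T) (S : T -> T -> R) (k : nat) (x y : T) : R :=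
  match k with
  | 0 => (x == y)%:R
  | k'.+1 => \sum_(z | X z) S x z * Spow X S k' z y
  end.

Definition stochastic (X : pred T) (S : T -> T -> R) : Prop :=
  forall x, X x -> (forall y, X y -> 0 <= S x y) /\ \sum_(y | X y) S x y = 1.

Definition irreducible (X : pred T) (S : T -> T -> R) : Prop :=
  forall x y, X x -> X y -> exists k, 0 < Spow X S k x y.

Definition aperiodic (X : pred T) (S : T -> T -> R) : Prop :=
  forall x, X x -> forall d : nat,
    (forall k : nat, (0 < k)%N -> 0 < Spow X S k x x -> (d %| k)%N) -> d = 1%N.

Definition ergodic (X : pred T) (S : T -> T -> R) : Prop :=
  irreducible X S /\ aperiodic X S.

Definition distribution (X : pred T) (pi : T -> R) : Prop :=
  (forall x, X x -> 0 <= pi x) /\ \sum_(x | X x) pi x = 1.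

Definition stationary (X : pred T) (S : T -> T -> R) (pi : T -> R) : Prop :=
  forall y, X y -> \sum_(x | X x) pi x * S x y = pi y.

Definition ergodic_uniform (X : pred T) (S : T -> T -> R) : Prop :=
  stochastic X S /\ ergodic X S /\
  forall pi, distribution X pi ->
    (stationary X S pi <-> forall x, X x -> pi x = 1 / #|X|%:R).

End Markov.

Arguments classN Sigma n : clear implicits.
Arguments classNm Sigma n m : clear implicits.
Arguments classN'm Sigma n m : clear implicits.

(* Main.v *)
Require Import Defs.
From mathcomp Require Import all_boot all_order all_algebra zify.
From mathcomp Require Import ring lra.
Set Implicit Arguments. Unset Strict Implicit.
Import Order.TTheory GRing.Theory Num.Theory.
Local Open Scope ring_scope.

Section Gen.
Variables (T : finType) (R : realFieldType) (X : pred T) (S : T -> T -> R).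
Hypothesis Sst : stochastic X S.
Hypothesis Ssym : forall x y, X x -> X y -> S x y = S y x.

Lemma S_ge0 x y : X x -> X y -> 0 <= S x y.
Proof. by move=> Xx Xy; case: (Sst Xx) => H _; exact: H. Qed.

Lemma Spow_ge0 k x y : X x -> 0 <= Spow X S k x y.
Proof.
elim: k x => [|k IH] x Xx /=; first by rewrite ler0n.
by apply: sumr_ge0 => z Xz; rewrite mulr_ge0 // ?S_ge0 // IH.
Qed.

Lemma Spow_step k x z y : X x -> X z -> 0 < S x z -> 0 < Spow X S k z y ->
  0 < Spow X S k.+1 x y.
Proof.
move=> Xx Xz Sxz Pk /=.
rewrite (bigD1 z) //= ltr_pwDl ?mulr_gt0 //.
by apply: sumr_ge0 => w /andP[Xw _]; rewrite mulr_ge0 // ?S_ge0 // Spow_ge0.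
Qed.

Lemma Spow_inv k x y : X x -> 0 < Spow X S k.+1 x y ->
  exists z, [/\ X z, 0 < S x z & 0 < Spow X S k z y].
Proof.
move=> Xx /= H.
have [|z /andP[Xz Hz]] := @psumr_neq0P _ _ _ _ _ (elimN eqP (lt0r_neq0 H)).
  by move=> z Xz; rewrite mulr_ge0 // ?S_ge0 // Spow_ge0.
exists z; split => //.
  by rewrite lt0r S_ge0 // andbT; apply: contraTneq Hz => ->; rewrite mul0r ltxx.
by rewrite lt0r Spow_ge0 // andbT; apply: contraTneq Hz => ->; rewrite mulr0 ltxx.
Qed.

Lemma Spow_comp a b x z y : X x -> X z -> 0 < Spow X S a x z -> 0 < Spow X S b z y ->
  0 < Spow X S (a + b) x y.
Proof.
elim: a x => [|a IH] x Xx Xz Ha Hb.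
  by move: Ha => /=; case: eqP => [->|]; rewrite ?ltxx.
have [w [Xw Sxw Hw]] := Spow_inv Xx Ha.
by rewrite addSn; apply: (Spow_step Xx Xw Sxw); apply: IH.
Qed.

Lemma Spow_rev k x y : X x -> X y -> 0 < Spow X S k x y -> 0 < Spow X S k y x.
Proof.
move=> Xx Xy; elim: k x Xx => [|k IH] x Xx.
  by rewrite /= eq_sym.
move=> H; have [w [Xw Sxw Hw]] := Spow_inv Xx H.
rewrite -addn1; apply: (Spow_comp Xy Xw (IH _ Xw Hw)).
apply: (Spow_step Xw Xx); first by rewrite Ssym.
by rewrite /= eqxx ltr01.
Qed.

Variable a0 : T.
Hypothesis Xa0 : X a0.
Hypothesis Sa0 : 0 < S a0 a0.
Hypothesis conn : forall x, X x -> exists k, 0 < Spow X S k x a0.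

Lemma gen_irr : irreducible X S.
Proof.
move=> x y Xx Xy.
have [k1 H1] := conn Xx; have [k2 H2] := conn Xy.
exists (k1 + k2); exact: Spow_comp Xx Xa0 H1 (Spow_rev Xy Xa0 H2).
Qed.

Lemma gen_aper : aperiodic X S.
Proof.
move=> x Xx d Hd.
have [k H1] := conn Xx; have H2 := Spow_rev Xx Xa0 H1.
have P1 : 0 < Spow X S 1 a0 a0 by apply: (Spow_step Xa0 Xa0 Sa0); rewrite /= eqxx ltr01.
have P2 : 0 < Spow X S (1 + 1) a0 a0 by apply: (Spow_comp Xa0 Xa0 P1 P1).
have Q1 : 0 < Spow X S (k + (1 + k)) x x.
  by apply: (Spow_comp Xx Xa0 H1); apply: (Spow_comp Xa0 Xa0 P1 H2).
have Q2 : 0 < Spow X S (k + ((1 + 1) + k)) x x.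
  by apply: (Spow_comp Xx Xa0 H1); apply: (Spow_comp Xa0 Xa0 P2 H2).
have D1 : (d %| k + (1 + k))%N by apply: Hd Q1; lia.
have D2 : (d %| (k + (1 + k)) + 1)%N.
  have -> : ((k + (1 + k)) + 1 = k + ((1 + 1) + k))%N by lia.
  by apply: Hd Q2; lia.
by move: D2; rewrite (dvdn_addr _ D1) dvdn1 => /eqP.
Qed.

End Gen.
Section Gen2.
Variables (T : finType) (R : realFieldType) (X : pred T) (S : T -> T -> R).
Hypothesis Sst : stochastic X S.
Hypothesis Ssym : forall x y, X x -> X y -> S x y = S y x.
Hypothesis Sirr : irreducible X S.

Lemma sumcol y : X y -> \sum_(x | X x) S x y = 1.
Proof.
move=> Xy; rewrite -(proj2 (Sst Xy)); apply: eq_bigr => x Xx; exact: Ssym.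
Qed.

Lemma gen_unif pi : distribution X pi ->
  (stationary X S pi <-> forall x, X x -> pi x = 1 / #|X|%:R).
Proof.
move=> [pi0 pi1]; split; last first.
  move=> Hu y Xy; rewrite (Hu _ Xy).
  rewrite (eq_bigr (fun x => 1 / #|X|%:R * S x y)); last by move=> x Xx; rewrite Hu.
  by rewrite -mulr_sumr sumcol // mulr1.
move=> Hst.
have Xne : exists x0, X x0.
  apply/existsP; apply: contraT => /negP H.
  have : \sum_(x | X x) pi x = 0.
    by rewrite big1 // => x Xx; case: H; apply/existsP; exists x.
  by rewrite pi1 => /eqP; rewrite oner_eq0.
case: Xne => a0 Xa0.
case: (@arg_maxP _ _ _ a0 X pi Xa0) => x0 Xx0 Hmax.
set M := pi x0.
have Hm : forall w, X w -> pi w <= M by move=> w Xw; exact: Hmax.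
have prop x z : X x -> X z -> pi x = M -> 0 < S x z -> pi z = M.
  move=> Xx Xz px Sxz.
  have E : \sum_(w | X w) (M - pi w) * S w x = 0.
    rewrite (eq_bigr (fun w => M * S w x - pi w * S w x)); last by move=> w _; rewrite mulrBl.
    by rewrite sumrB -mulr_sumr sumcol // mulr1 Hst // px subrr.
  have nn : forall w, X w -> 0 <= (M - pi w) * S w x.
    by move=> w Xw; rewrite mulr_ge0 ?subr_ge0 ?Hm ?(proj1 (Sst Xw)).
  move: (psumr_eq0P nn E Xz) => /eqP.
  by rewrite mulf_eq0 (Ssym Xz Xx) (gt_eqF Sxz) orbF subr_eq0 => /eqP.
have path k x y : X x -> X y -> pi x = M -> 0 < Spow X S k x y -> pi y = M.
  elim: k x => [|k IH] x Xx Xy px.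
    by rewrite /=; case: eqP => [<-|]; rewrite ?ltxx.
  move=> H; have [w [Xw Sxw Hw]] := Spow_inv Sst Xx H.
  exact: (IH w Xw Xy (prop _ _ Xx Xw px Sxw) Hw).
have allM y : X y -> pi y = M.
  by move=> Xy; have [k Hk] := Sirr Xx0 Xy; exact: (path _ _ _ Xx0 Xy erefl Hk).
have : \sum_(x | X x) pi x = M *+ #|X|.
  by rewrite -sumr_const; apply: eq_bigr => x Xx; rewrite allM.
rewrite pi1 => H1 x Xx; rewrite -mulr_natr in H1.
have Nne : #|X|%:R != 0 :> R.
  by apply/eqP => E; move: H1; rewrite E mulr0 => /eqP; rewrite oner_eq0.
by rewrite allM // {1}H1 mulrK // unitfE.
Qed.
End Gen2.

Lemma toggle_inv (T : finType) (x : T) B : toggle x (toggle x B) = B.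
Proof.
rewrite /toggle; case: (boolP (x \in B)) => H.
  by rewrite in_setD1 eqxx /= setD1K.
by rewrite in_setU1 eqxx /= setU1K.
Qed.

Lemma toggle_neq (T : finType) (x : T) B : toggle x B != B.
Proof.
rewrite /toggle; case: ifP => H; apply/eqP => E.
  by have := H; rewrite -E in_setD1 eqxx.
by move: H; rewrite -E in_setU1 eqxx.
Qed.

Section Auto.
Variables (Sigma : finType) (n : nat).
Local Notation N := (nfa Sigma n).

Lemma nfaE (A : N) : A = (initS A, finalS A, transS A).
Proof. by case: A => [[I F] D]. Qed.

Lemma Ch_init_inv (A : N) q : Ch_init (Ch_init A q) q = A.
Proof. by case: A => [[I F] D]; rewrite /Ch_init /= toggle_inv. Qed.
Lemma Ch_final_inv (A : N) q : Ch_final (Ch_final A q) q = A.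
Proof. by case: A => [[I F] D]; rewrite /Ch_final /= toggle_inv. Qed.
Lemma Ch_trans_inv (A : N) t : Ch_trans (Ch_trans A t) t = A.
Proof. by case: A => [[I F] D]; rewrite /Ch_trans /= toggle_inv. Qed.

Lemma Ch_init_neq (A : N) q : Ch_init A q != A.
Proof. by apply/eqP => E; have := congr1 (@initS _ _) E; apply/eqP; apply: toggle_neq. Qed.
Lemma Ch_final_neq (A : N) q : Ch_final A q != A.
Proof. by apply/eqP => E; have := congr1 (@finalS _ _) E; apply/eqP; apply: toggle_neq. Qed.
Lemma Ch_trans_neq (A : N) t : Ch_trans A t != A.
Proof. by apply/eqP => E; have := congr1 (@transS _ _) E; apply/eqP; apply: toggle_neq. Qed.

Variable R : realFieldType.
Variables r1 r2 r3 : R.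
Hypotheses (r1p : 0 < r1) (r2p : 0 < r2) (r3p : 0 < r3) (rs : r1 + r2 + r3 <= 1).
Hypotheses (np : (0 < n)%N) (Sp : (0 < #|Sigma|)%N).

Definition E1 (x y : N) := [exists q, y == Ch_init x q].
Definition E2 (x y : N) := [exists q, y == Ch_final x q].
Definition E3 (x y : N) := [exists q, y == Ch_trans x q].

Lemma E1_sym (x y : N) : E1 x y = E1 y x.
Proof.
by apply/idP/idP => /existsP[q /eqP E]; apply/existsP; exists q; rewrite E Ch_init_inv.
Qed.
Lemma E2_sym (x y : N) : E2 x y = E2 y x.
Proof.
by apply/idP/idP => /existsP[q /eqP E]; apply/existsP; exists q; rewrite E Ch_final_inv.
Qed.
Lemma E3_sym (x y : N) : E3 x y = E3 y x.
Proof.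
by apply/idP/idP => /existsP[q /eqP E]; apply/existsP; exists q; rewrite E Ch_trans_inv.
Qed.

Definition sg (b1 b2 b3 : bool) : R :=
  if b1 then r1 / n%:R else if b2 then r2 / n%:R
  else if b3 then r3 / (#|Sigma|%:R * (n%:R) ^+ 2) else 0.

Lemma Soff_sg (x y : N) : Soff r1 r2 r3 x y = sg (E1 x y) (E2 x y) (E3 x y).
Proof. by []. Qed.

Lemma Soff_sym (x y : N) : Soff r1 r2 r3 x y = Soff r1 r2 r3 y x.
Proof. by rewrite !Soff_sg (E1_sym x y) (E2_sym x y) (E3_sym x y). Qed.

Let cI := r1 / n%:R.
Let cF := r2 / n%:R.
Let cT := r3 / (#|Sigma|%:R * n%:R ^+ 2).

Lemma cI_gt0 : 0 < cI. Proof. by rewrite divr_gt0 // ltr0n. Qed.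
Lemma cF_gt0 : 0 < cF. Proof. by rewrite divr_gt0 // ltr0n. Qed.
Lemma cT_gt0 : 0 < cT. Proof. by rewrite divr_gt0 // mulr_gt0 ?exprn_gt0 ?ltr0n. Qed.

Lemma Soff_ge0 (x y : N) : 0 <= Soff r1 r2 r3 x y.
Proof.
have := cI_gt0; have := cF_gt0; have := cT_gt0.
rewrite Soff_sg /sg /cI /cF /cT => ? ? ?.
case: (E1 x y); first exact: ltW.
case: (E2 x y); first exact: ltW.
by case: (E3 x y); first exact: ltW.
Qed.

Lemma Soff_gt0 (x y : N) : [|| E1 x y, E2 x y | E3 x y] -> 0 < Soff r1 r2 r3 x y.
Proof.
have := cI_gt0; have := cF_gt0; have := cT_gt0.
rewrite Soff_sg /sg /cI /cF /cT => ? ? ?.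
by case: (E1 x y) => //=; case: (E2 x y) => //=; case: (E3 x y).
Qed.

Lemma Smat_off (X : pred N) (x y : N) : x != y -> Smat X r1 r2 r3 x y = Soff r1 r2 r3 x y.
Proof. by rewrite /Smat => /negbTE ->. Qed.

Lemma Smat_sym (X : pred N) (x y : N) : Smat X r1 r2 r3 x y = Smat X r1 r2 r3 y x.
Proof.
case: (eqVneq x y) => [->//|ne].
by rewrite (Smat_off _ ne) Smat_off 1?eq_sym // Soff_sym.
Qed.

Lemma sum_ind (T : finType) (B : {set T}) : \sum_(z : T) ((z \in B)%:R : R) = #|B|%:R.
Proof.
rewrite -sum1_card natr_sum [RHS]big_mkcond; apply: eq_bigr => z _.
by case: (z \in B).
Qed.

Lemma sum_bound (X : pred N) (x : N) (A : {set 'I_n}) :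
  (forall q, q \notin A -> ~~ X (Ch_init x q)) ->
  \sum_(z | X z && (z != x)) Soff r1 r2 r3 x z <= cI * #|A|%:R + r2 + r3.
Proof.
move=> HA.
set BI := [set Ch_init x q | q in A].
set BF := [set Ch_final x q | q : 'I_n].
set BT := [set Ch_trans x t | t : 'I_n * Sigma * 'I_n].
have cI0 := ltW cI_gt0; have cF0 := ltW cF_gt0; have cT0 := ltW cT_gt0.
have pt z : X z -> Soff r1 r2 r3 x z <=
   cI * (z \in BI)%:R + cF * (z \in BF)%:R + cT * (z \in BT)%:R.
  move=> Xz; rewrite Soff_sg /sg; case: (boolP (E1 x z)) => [/existsP[q /eqP Ez]|_].
    have qA : q \in A by apply: contraTT Xz => /HA; rewrite Ez.
    rewrite Ez (imset_f _ qA) mulr1 -addrA lerDl.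
    by rewrite addr_ge0 // mulr_ge0.
  case: (boolP (E2 x z)) => [/existsP[q /eqP Ez]|_].
    rewrite Ez; have -> : Ch_final x q \in BF by apply/imsetP; exists q.
    rewrite mulr1 -addrA addrC -addrA lerDl.
    by rewrite addr_ge0 // mulr_ge0.
  case: (boolP (E3 x z)) => [/existsP[q /eqP Ez]|_].
    rewrite Ez; have -> : Ch_trans x q \in BT by apply/imsetP; exists q.
    rewrite mulr1 addrC lerDl.
    by rewrite addr_ge0 // mulr_ge0.
  by rewrite !addr_ge0 // mulr_ge0.
apply: (@le_trans _ _ (\sum_z (cI * (z \in BI)%:R + cF * (z \in BF)%:R + cT * (z \in BT)%:R))).
  rewrite big_mkcond /=; apply: ler_sum => z _.
  case: ifP => [/andP[Xz _]|_]; first exact: pt.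
  by rewrite !addr_ge0 // mulr_ge0.
rewrite !big_split /= -!mulr_sumr !sum_ind.
have nn : n%:R != 0 :> R by rewrite pnatr_eq0 -lt0n.
have sn : #|Sigma|%:R != 0 :> R by rewrite pnatr_eq0 -lt0n.
repeat apply: lerD.
- by rewrite ler_wpM2l // ler_nat leq_imset_card.
- apply: (@le_trans _ _ (cF * n%:R)).
    rewrite ler_wpM2l // ler_nat; apply: leq_trans (leq_imset_card _ _) _.
    by rewrite card_ord.
  by rewrite /cF divfK.
- apply: (@le_trans _ _ (cT * (n * #|Sigma| * n)%:R)).
    rewrite ler_wpM2l // ler_nat; apply: leq_trans (leq_imset_card _ _) _.
    by rewrite !card_prod !card_ord.
  rewrite /cT !natrM le_eqVlt; apply/orP; left; apply/eqP; field.
  by rewrite nn sn.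
Qed.

Lemma stoch (X : pred N) : stochastic X (Smat X r1 r2 r3).
Proof.
move=> x Xx; split.
  move=> y Xy; rewrite /Smat; case: eqP => _; last exact: Soff_ge0.
  rewrite subr_ge0; apply: le_trans (sum_bound (A := [set: 'I_n]) _) _.
    by move=> q; rewrite in_setT.
  rewrite cardsT card_ord /cI divfK ?pnatr_eq0 -?lt0n //.
rewrite (bigD1 x) //= /Smat eqxx.
rewrite [X in _ + X = _](eq_bigr (fun y => Soff r1 r2 r3 x y)) ?subrK //.
by move=> y /andP[_ ne]; rewrite eq_sym (negbTE ne).
Qed.

Lemma connect_empty (A : N) i q : transS A = set0 -> connect (step A) i q -> i = q.
Proof.
move=> E /connectP[[|s p] /= Hp ->] //.
by move: Hp => /andP[/existsP[a]]; rewrite E in_set0.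
Qed.

Definition a0 : N := ([set: 'I_n], [set: 'I_n], set0).

Lemma not_trim_a0 q : ~~ trim (Ch_init a0 q).
Proof.
apply/negP => /andP[/forallP /(_ q) /existsP[i /andP[Hi Hc]] _].
have := @connect_empty (Ch_init a0 q) i q erefl Hc => Eiq.
by move: Hi; rewrite Eiq /Ch_init /a0 /initS /= /toggle in_setT in_setD1 eqxx.
Qed.

Lemma step_eq (A B : N) : transS A = transS B -> step A = step B.
Proof. by move=> E; rewrite /step E. Qed.

Lemma trim_mono (A B : N) : transS A = transS B ->
  initS A \subset initS B -> finalS A \subset finalS B -> trim A -> trim B.
Proof.
move=> E /subsetP sI /subsetP sF /andP[/forallP H1 /forallP H2].
rewrite /trim -(step_eq E); apply/andP; split; apply/forallP => q.
  have /existsP[i /andP[Hi Hc]] := H1 q; apply/existsP; exists i; by rewrite sI.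
have /existsP[i /andP[Hi Hc]] := H2 q; apply/existsP; exists i; by rewrite sF.
Qed.

Lemma trim_full (A : N) : initS A = setT -> finalS A = setT -> trim A.
Proof.
move=> EI EF; apply/andP; split; apply/forallP => q; apply/existsP; exists q.
  by rewrite EI in_setT connect0.
by rewrite EF in_setT connect0.
Qed.

Definition mu (A : N) : nat := #|~: initS A| + #|~: finalS A| + #|transS A|.

Lemma card_toggle_add (T : finType) (q : T) (B : {set T}) : q \notin B ->
  (#|~: toggle q B| < #|~: B|)%N.
Proof.
move=> qB; rewrite /toggle (negbTE qB); apply: proper_card.
apply/properP; split; first by rewrite setCS subsetUr.
by exists q; rewrite !inE ?eqxx //= qB.
Qed.

Section ChE.
Variables (x : N) (q : 'I_n) (t : 'I_n * Sigma * 'I_n).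
Lemma iI : initS (Ch_init x q) = toggle q (initS x). Proof. by []. Qed.
Lemma fI : finalS (Ch_init x q) = finalS x. Proof. by []. Qed.
Lemma tI : transS (Ch_init x q) = transS x. Proof. by []. Qed.
Lemma iF : initS (Ch_final x q) = initS x. Proof. by []. Qed.
Lemma fF : finalS (Ch_final x q) = toggle q (finalS x). Proof. by []. Qed.
Lemma tF : transS (Ch_final x q) = transS x. Proof. by []. Qed.
Lemma iT : initS (Ch_trans x t) = initS x. Proof. by []. Qed.
Lemma fT : finalS (Ch_trans x t) = finalS x. Proof. by []. Qed.
Lemma tT : transS (Ch_trans x t) = toggle t (transS x). Proof. by []. Qed.
End ChE.
Definition ChE := (iI, fI, tI, iF, fF, tF, iT, fT, tT).

Section Class.
Variables (X : pred N) (P : pred {set ('I_n * Sigma * 'I_n)}).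
Hypothesis HX : forall A, X A = trim A && P (transS A).
Hypothesis HPm : forall D D' : {set ('I_n * Sigma * 'I_n)}, D' \subset D -> P D -> P D'.
Hypothesis HP0 : P set0.

Lemma Xa0 : X a0.
Proof. by rewrite HX HP0 andbT trim_full. Qed.

Lemma Sa0 : 0 < Smat X r1 r2 r3 a0 a0.
Proof.
pose q0 : 'I_n := Ordinal np.
rewrite /Smat eqxx subr_gt0.
apply: le_lt_trans (sum_bound (A := [set~ q0]) _) _.
  move=> q; rewrite !inE negbK => /eqP ->; rewrite HX.
  by rewrite (negbTE (not_trim_a0 q0)).
rewrite cardsC1 card_ord; apply: lt_le_trans rs.
rewrite -!addrA ltrD2r /cI.
have nn : 0 < n%:R :> R by rewrite ltr0n.
have E : r1 / n%:R * n%:R = r1 by rewrite divfK // gt_eqF.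
rewrite -[Y in _ < Y]E ltr_pM2l ?divr_gt0 //.
by rewrite ltr_nat prednK // ltnSn.
Qed.

Lemma neighbor x : X x -> x != a0 ->
  exists y, [/\ X y, 0 < Smat X r1 r2 r3 x y & (mu y < mu x)%N].
Proof.
move=> Xx nx; move: (Xx); rewrite HX => /andP[tx Px].
case: (boolP [exists q, q \notin initS x]) => [/existsP[q qI]|/existsPn aI].
  exists (Ch_init x q); split.
  - rewrite HX ChE Px andbT; apply: (trim_mono _ _ _ tx); rewrite ?ChE ?subxx //.
    by rewrite /toggle (negbTE qI) subsetUr.
  - rewrite Smat_off 1?eq_sym ?Ch_init_neq //; apply: Soff_gt0.
    by rewrite /E1; apply/orP; left; apply/existsP; exists q.
  - by rewrite /mu !ChE ltn_add2r ltn_add2r card_toggle_add.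
case: (boolP [exists q, q \notin finalS x]) => [/existsP[q qF]|/existsPn aF].
  exists (Ch_final x q); split.
  - rewrite HX ChE Px andbT; apply: (trim_mono _ _ _ tx); rewrite ?ChE ?subxx //.
    by rewrite /toggle (negbTE qF) subsetUr.
  - rewrite Smat_off 1?eq_sym ?Ch_final_neq //; apply: Soff_gt0.
    by rewrite /E2; apply/orP; right; apply/orP; left; apply/existsP; exists q.
  - by rewrite /mu !ChE ltn_add2r ltn_add2l card_toggle_add.
have EI : initS x = setT by apply/setP => q; rewrite in_setT; have := aI q; rewrite negbK.
have EF : finalS x = setT by apply/setP => q; rewrite in_setT; have := aF q; rewrite negbK.
have /set0Pn[t tD] : transS x != set0.
  apply: contra nx => /eqP ED; apply/eqP.
  by rewrite (nfaE x) EI EF ED.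
exists (Ch_trans x t); split.
- rewrite HX trim_full ?ChE //= ; apply: HPm Px.
  by rewrite /toggle tD subsetDl.
- rewrite Smat_off 1?eq_sym ?Ch_trans_neq //; apply: Soff_gt0.
  by rewrite /E3; apply/orP; right; apply/orP; right; apply/existsP; exists t.
- by rewrite /mu !ChE ltn_add2l /toggle tD (cardsD1 t (transS x)) tD.
Qed.

Lemma conn x : X x -> exists k, 0 < Spow X (Smat X r1 r2 r3) k x a0.
Proof.
move=> Xx; move: {2}(mu x) (leqnn (mu x)) => k Hk.
elim: k x Hk Xx => [|k IH] x Hk Xx;
  (case: (eqVneq x a0) => [->|nx]; first by exists 0%N; rewrite /= eqxx ltr01);
  have [y [Xy Sxy my]] := neighbor Xx nx.
  by move: (leq_trans my Hk).
have [j Hj] := IH y (leq_trans my Hk) Xy.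
by exists j.+1; apply: (Spow_step (stoch (X:=X)) Xx Xy Sxy Hj).
Qed.

Lemma class_ok : ergodic_uniform X (Smat X r1 r2 r3).
Proof.
have Ssy : forall x y, X x -> X y -> Smat X r1 r2 r3 x y = Smat X r1 r2 r3 y x.
  by move=> x y _ _; apply: Smat_sym.
have Irr := gen_irr (stoch (X:=X)) Ssy Xa0 conn.
split; first exact: stoch.
split; first by split => //; apply: (gen_aper (stoch (X:=X)) Ssy Xa0 Sa0 conn).
by move=> pi Hpi; apply: (gen_unif (stoch (X:=X)) Ssy Irr).
Qed.

End Class.
End Auto.

Theorem proposition1 (R : realFieldType) (Sigma : finType) (m n : nat)
  (r1 r2 r3 : R) :
  (2 <= #|Sigma|)%N -> (0 < n)%N -> (2 <= m)%N ->
  0 < r1 -> 0 < r2 -> 0 < r3 -> r1 + r2 + r3 <= 1 ->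
  [/\ ergodic_uniform (classN Sigma n) (Smat (classN Sigma n) r1 r2 r3),
      ergodic_uniform (classNm Sigma n m) (Smat (classNm Sigma n m) r1 r2 r3)
    & ergodic_uniform (classN'm Sigma n m) (Smat (classN'm Sigma n m) r1 r2 r3)].
Proof.
move=> HS np _ r1p r2p r3p rs.
have Sp : (0 < #|Sigma|)%N by apply: leq_trans HS.
split.
- apply: (class_ok r1p r2p r3p rs np Sp (P := fun _ => true)) => //.
  by move=> A; rewrite andbT.
- apply: (class_ok r1p r2p r3p rs np Sp
    (P := fun D => [forall p : 'I_n, #|[set aq : Sigma * 'I_n | (p, aq.1, aq.2) \in D]| <= m]%N)) => //.
  + move=> D D' sub /forallP H; apply/forallP => p; apply: leq_trans (H p).
    apply: subset_leq_card; apply/subsetP => aq; rewrite !inE; exact: (subsetP sub).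
  + apply/forallP => p.
    have -> : [set aq : Sigma * 'I_n | (p, aq.1, aq.2) \in (set0 : {set 'I_n * Sigma * 'I_n})] = set0.
      by apply/setP => aq; rewrite !inE.
    by rewrite cards0.
- apply: (class_ok r1p r2p r3p rs np Sp
    (P := fun D => [forall p : 'I_n, forall a : Sigma, #|[set q : 'I_n | (p, a, q) \in D]| <= m]%N)) => //.
  + move=> D D' sub /forallP H; apply/forallP => p; apply/forallP => a.
    apply: leq_trans (forallP (H p) a).
    apply: subset_leq_card; apply/subsetP => q; rewrite !inE; exact: (subsetP sub).
  + apply/forallP => p; apply/forallP => a.
    have -> : [set q : 'I_n | (p, a, q) \in (set0 : {set 'I_n * Sigma * 'I_n})] = set0.
      by apply/setP => q; rewrite !inE.
    by rewrite cards0.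
Qed.
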